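(* Let $G$ be a group with elements $A,B,C,D$ such that $A$ commutes with $B$, $B$ commutes with $C$, $C$ commutes with $D$ and $D$ commutes with $A$. If neither of the subgroups $\langle A,C\rangle$ and $\langle B,D\rangle$ is soluble, then $G$ does not embed in $GL(3,\mathbb{F})$ for any field $\mathbb{F}$. *)

(* Defs.v *)
(* Abstract (possibly infinite) groups are given as a carrier
   type with explicit operations satisfying the group axioms. *)
From HB Require Import structures.
From mathcomp Require Import all_boot all_order all_algebra.
Set Implicit Arguments.
Unset Strict Implicit.
Unset Printing Implicit Defensive.
Import GRing.Theory.
Local Open Scope ring_scope.

Definition is_group (T : Type) (mul : T -> T -> T) (one : T) (inv : T -> T)
  : Prop :=
  [/\ (forall x y z, mul x (mul y z) = mul (mul x y) z),
      (forall x, mul one x = x),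
      (forall x, mul x one = x),
      (forall x, mul (inv x) x = one) &
      (forall x, mul x (inv x) = one)].

Definition is_subgroup (T : Type) (mul : T -> T -> T) (one : T)
  (inv : T -> T) (H : T -> Prop) : Prop :=
  [/\ H one, (forall x y, H x -> H y -> H (mul x y)) &
      (forall x, H x -> H (inv x))].

Definition gen (T : Type) (mul : T -> T -> T) (one : T) (inv : T -> T)
  (S : T -> Prop) : T -> Prop :=
  fun x => forall H, is_subgroup mul one inv H ->
                     (forall y, S y -> H y) -> H x.

Definition commg (T : Type) (mul : T -> T -> T) (inv : T -> T) (x y : T) : T :=
  mul (mul (inv x) (inv y)) (mul x y).

Definition derived (T : Type) (mul : T -> T -> T) (one : T) (inv : T -> T)
  (H : T -> Prop) : T -> Prop :=
  gen mul one inv (fun z => exists x y, [/\ H x, H y & z = commg mul inv x y]).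

Fixpoint derived_series (T : Type) (mul : T -> T -> T) (one : T)
  (inv : T -> T) (H : T -> Prop) (n : nat) : T -> Prop :=
  match n with
  | 0 => H
  | n'.+1 => derived mul one inv (derived_series mul one inv H n')
  end.

Definition soluble (T : Type) (mul : T -> T -> T) (one : T) (inv : T -> T)
  (H : T -> Prop) : Prop :=
  exists n, forall x, derived_series mul one inv H n x -> x = one.

Definition embeds_in_GL3 (T : Type) (mul : T -> T -> T) (F : fieldType) : Prop :=
  exists phi : T -> 'M[F]_3,
    [/\ (forall g, phi g \in unitmx),
        (forall x y, phi (mul x y) = phi x *m phi y) &
        injective phi].

(* Main.v *)
Require Import Defs.
From mathcomp Require Import all_boot all_order all_algebra.
From HB Require Import structures.
From mathcomp Require Import all_boot all_order all_algebra.
Require Import Defs.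
Set Implicit Arguments.
Unset Strict Implicit.
Unset Printing Implicit Defensive.

Lemma inv_uniq T mul one inv (HG : @is_group T mul one inv) x y :
  mul x y = one -> inv x = y.
Proof.
case: HG => ass l1 r1 li ri h.
by rewrite -[inv x]r1 -h ass li l1.
Qed.

Lemma inv_mul T mul one inv (HG : @is_group T mul one inv) x y :
  inv (mul x y) = mul (inv y) (inv x).
Proof.
apply: (inv_uniq HG); case: HG => ass l1 r1 li ri.
by rewrite -ass (ass y) ri l1 ri.
Qed.

Lemma inv_inv T mul one inv (HG : @is_group T mul one inv) x : inv (inv x) = x.
Proof. apply: (@inv_uniq _ _ _ _ HG); by case: HG. Qed.

Lemma inv_one T mul one inv (HG : @is_group T mul one inv) : inv one = one.
Proof. apply: (@inv_uniq _ _ _ _ HG); by case: HG. Qed.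

Lemma inv_commg T mul one inv (HG : @is_group T mul one inv) x y :
  inv (commg mul inv x y) = commg mul inv y x.
Proof.
apply: (inv_uniq HG); rewrite /commg.
case: HG => ass l1 r1 li ri.
rewrite -!ass (ass y) ri l1 (ass x) ri l1.
by rewrite (ass (inv y)) li l1 li.
Qed.

Lemma gen_subgroup T mul one inv (S : T -> Prop) :
  is_subgroup mul one inv (gen mul one inv S).
Proof.
split.
- by move=> H [].
- by move=> x y hx hy H sH hS; case: (sH) => _ hm _; apply: hm; [apply: hx|apply: hy].
- by move=> x hx H sH hS; case: (sH) => _ _ hi; apply: hi; apply: hx.
Qed.

Lemma gen_min T mul one inv (S P : T -> Prop) :
  is_subgroup mul one inv P -> (forall y, S y -> P y) ->
  forall x, gen mul one inv S x -> P x.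
Proof. by move=> sP hS x hx; apply: hx. Qed.

Lemma gen_incl T mul one inv (S : T -> Prop) y : S y -> gen mul one inv S y.
Proof. by move=> hy H _ hS; apply: hS. Qed.

Lemma pair_subgroup T mul one inv (HG : @is_group T mul one inv) (Q : T -> Prop) :
  Q one -> (forall x y, Q x -> Q y -> Q (mul x y)) ->
  is_subgroup mul one inv (fun x => Q x /\ Q (inv x)).
Proof.
move=> q1 qm; split.
- by rewrite (inv_one HG).
- move=> x y [hx hx'] [hy hy']; split; first exact: qm.
  by rewrite (inv_mul HG); apply: qm.
- by move=> x [hx hx']; rewrite (inv_inv HG).
Qed.

Lemma soluble_chain T mul one inv (HG : @is_group T mul one inv)
  (S : T -> Prop) (P : nat -> T -> Prop) (N : nat) :
  (forall k, P k one) -> (forall k x y, P k x -> P k y -> P k (mul x y)) ->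
  (forall k x y, P k x -> P k (inv x) -> P k y -> P k (inv y) ->
      P k.+1 (commg mul inv x y)) ->
  (forall x, P N x -> x = one) ->
  (forall s, S s -> P 0 s /\ P 0 (inv s)) ->
  soluble mul one inv (gen mul one inv S).
Proof.
move=> p1 pm pc pN pS; exists N.
suff H : forall k x, derived_series mul one inv (gen mul one inv S) k x ->
    P k x /\ P k (inv x).
  by move=> x /H [] /pN.
elim=> [|k IH] x /=.
  move=> hx; apply: (gen_min (P := fun x => P 0 x /\ P 0 (inv x))) hx => //.
  exact: (pair_subgroup HG (p1 0) (pm 0)).
rewrite /derived => hx.
apply: (gen_min (P := fun x => P k.+1 x /\ P k.+1 (inv x))) hx.
  exact: (pair_subgroup HG (p1 k.+1) (pm k.+1)).
move=> z [u [v [hu hv ->]]].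
case: (IH _ hu) => hu1 hu2; case: (IH _ hv) => hv1 hv2.
split; first exact: pc.
by rewrite (inv_commg HG); apply: pc.
Qed.

Lemma soluble_abelian T mul one inv (HG : @is_group T mul one inv) (A C : T) :
  mul A C = mul C A ->
  soluble mul one inv (gen mul one inv (fun x => x = A \/ x = C)).
Proof.
move=> hAC.
set S := (fun x => x = A \/ x = C).
set G := gen mul one inv S.
have commI : forall x y, mul x y = mul y x -> mul (inv x) y = mul y (inv x).
  move=> x y hxy; case: (HG) => ass l1 r1 li ri.
  transitivity (mul (inv x) (mul (mul y x) (inv x))).
    by rewrite -ass ri r1.
  by rewrite -hxy (ass (inv x)) (ass (inv x) x y) li l1.
have commM : forall x y z, mul x z = mul z x -> mul y z = mul z y ->
    mul (mul x y) z = mul z (mul x y).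
  move=> x y z h1 h2; case: (HG) => ass l1 r1 li ri.
  by rewrite -ass h2 ass h1 ass.
have Z1 : forall g, G g -> mul g A = mul A g /\ mul g C = mul C g.
  apply: gen_min.
    split.
    - by case: HG => ass l1 r1 _ _; rewrite l1 r1 l1 r1.
    - by move=> x y [h1 h2] [h3 h4]; split; apply: commM.
    - by move=> x [h1 h2]; split; apply: commI.
  by move=> y [->|->]; split.
have Z2 : forall g, G g -> forall h, G h -> mul g h = mul h g.
  move=> g hg; apply: gen_min.
    split.
    - by case: HG => ass l1 r1 _ _; rewrite l1 r1.
    - by move=> x y h1 h2; symmetry; apply: commM; symmetry.
    - by move=> x h1; symmetry; apply: commI; symmetry.
  move=> y [->|->]; case: (Z1 _ hg) => //.
apply: (soluble_chain (N := 1) HG (P := fun k x => if k is 0 then G x else x = one)).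
- by case=> [|k] //; case: (gen_subgroup mul one inv S).
- case=> [|k] x y /=; first by case: (gen_subgroup mul one inv S) => _ hm _; apply: hm.
  by move=> -> ->; case: HG.
- case=> [|k] x y /=.
    move=> hx hx' hy hy'; rewrite /commg (Z2 _ hx _ hy).
    case: (HG) => ass l1 r1 li ri.
    by rewrite ass -(ass (inv x)) li r1 li.
  move=> -> _ -> _; rewrite /commg (inv_one HG); by case: HG => ass l1 r1 _ _; rewrite !l1.
- by [].
- move=> s hs; split; first exact: gen_incl.
  by case: (gen_subgroup mul one inv S) => _ _ hi; apply: hi; apply: gen_incl.
Qed.

Import GRing.Theory.
Local Open Scope ring_scope.
Lemma subB_sub (F : fieldType) m1 m2 n (A B : 'M[F]_(m1, n)) (C : 'M[F]_(m2, n)) :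
  (A <= C)%MS -> (B <= C)%MS -> (A - B <= C)%MS.
Proof.
move=> hA hB; apply: addmx_sub => //.
by rewrite -scaleN1r scalemx_sub.
Qed.

Lemma rank_add_line (F : fieldType) m n (U : 'M[F]_(m, n)) (w : 'rV[F]_n) :
  ~~ (w <= U)%MS -> \rank (U + w)%MS = (\rank U).+1.
Proof.
move=> hw.
have w0 : w != 0 by apply: contra hw => /eqP ->; rewrite sub0mx.
have rw : \rank w = 1%N by rewrite rank_rV w0.
have hc : \rank (U :&: w)%MS = 0%N.
  have := mxrank_leqif_sup (capmxSr U w).
  rewrite rw; case=> le1 eqiff.
  move: le1; rewrite leq_eqVlt ltnS leqn0 => /orP[/eqP h1|/eqP //].
  exfalso; move: h1 => /eqP; rewrite eqiff sub_capmx submx_refl andbT => hwU.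
  by rewrite hwU in hw.
have := mxrank_sum_cap U w; rewrite hc rw addn0 addn1 => ->.
done.
Qed.

Lemma scal_lemma (F : fieldType) n (W U M : 'M[F]_n) :
  (U <= W)%MS -> \rank W = (\rank U).+1 -> (W *m M <= W)%MS -> (U *m M <= U)%MS ->
  exists a, (W *m (M - a%:M) <= U)%MS.
Proof.
move=> UW rW WM UM.
have nWU : ~~ (W <= U)%MS.
  by apply/negP => /mxrankS; rewrite rW ltnn.
case/row_subPn: nWU => i hi.
set w := row i W in hi *.
have wW : (w <= W)%MS by apply: row_sub.
have hUw : (W <= U + w)%MS.
  have sub : (U + w <= W)%MS by rewrite addsmx_sub UW wW.
  have := mxrank_leqif_sup sub; rewrite rank_add_line // rW.
  by case=> _ <-.
have : (w *m M <= U + w)%MS.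
  apply: submx_trans hUw; apply: submx_trans WM; exact: submxMr.
case/sub_addsmxP => u Hu.
exists (u.2 0 0).
have hw : (w *m (M - (u.2 0 0)%:M) <= U)%MS.
  rewrite mulmxBr mul_mx_scalar Hu {1}[u.2]mx11_scalar mul_scalar_mx addrK.
  exact: submxMl.
have hU : (U *m (M - (u.2 0 0)%:M) <= U)%MS.
  rewrite mulmxBr mul_mx_scalar; apply: subB_sub => //.
  by apply: scalemx_sub; apply: submx_refl.
apply: submx_trans (submxMr _ hUw) _.
by rewrite addsmxMr addsmx_sub hU hw.
Qed.

Definition fx (F : fieldType) (W U M : 'M[F]_3) := (W *m (M - 1%:M) <= U)%MS.

Lemma fx_stab (F : fieldType) (W M : 'M[F]_3) : fx W W M -> (W *m M <= W)%MS.
Proof.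
rewrite /fx mulmxBr mulmx1 => h.
have -> : W *m M = (W *m M - W) + W by rewrite subrK.
by apply: addmx_sub => //; apply: submx_refl.
Qed.

Lemma stab_fx (F : fieldType) (W M : 'M[F]_3) : (W *m M <= W)%MS -> fx W W M.
Proof.
by rewrite /fx mulmxBr mulmx1 => h; apply: subB_sub => //; apply: submx_refl.
Qed.

Lemma fx_mul (F : fieldType) (W U M N : 'M[F]_3) :
  fx W U M -> fx W U N -> fx U U N -> fx W U (M *m N).
Proof.
rewrite /fx => h1 h2 h3.
have -> : M *m N - 1%:M = (M - 1%:M) *m N + (N - 1%:M).
  by rewrite mulmxBl mul1mx addrA subrK.
rewrite mulmxDr mulmxA; apply: addmx_sub => //.
apply: submx_trans (submxMr _ h1) _; exact: fx_stab.
Qed.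

Lemma fx_one (F : fieldType) (W U : 'M[F]_3) : fx W U 1%:M.
Proof. by rewrite /fx subrr mulmx0 sub0mx. Qed.

Lemma fx_subl (F : fieldType) (W W' U M : 'M[F]_3) :
  (W' <= W)%MS -> fx W U M -> fx W' U M.
Proof. by rewrite /fx => h1 h2; apply: submx_trans h2; apply: submxMr. Qed.

Lemma fx_subr (F : fieldType) (W U U' M : 'M[F]_3) :
  (U <= U')%MS -> fx W U M -> fx W U' M.
Proof. by rewrite /fx => h1 h2; apply: submx_trans h1. Qed.

Lemma fx0 (F : fieldType) (U M : 'M[F]_3) : fx 0 U M.
Proof. by rewrite /fx mul0mx sub0mx. Qed.

Lemma stab_inv (F : fieldType) (W M M' : 'M[F]_3) :
  M' *m M = 1%:M -> (W *m M <= W)%MS -> (W *m M' <= W)%MS.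
Proof.
move=> hM hs.
have uM : M \in unitmx.
  by have := unitmx1 F 3; rewrite -hM unitmx_mul => /andP[].
have hMM : M *m M' = 1%:M by apply: mulmx1C.
have : (W <= W *m M)%MS.
  have := mxrank_leqif_sup hs.
  by rewrite mxrankMfree ?row_free_unit // => -[_ <-].
move/(submxMr M'); rewrite -mulmxA hMM mulmx1 => h.
by apply: submx_trans h; apply: submx_refl.
Qed.

Lemma fx_inv (F : fieldType) (W M M' : 'M[F]_3) :
  M' *m M = 1%:M -> fx W W M -> fx W W M'.
Proof. by move=> h /fx_stab /(stab_inv h) /stab_fx. Qed.

Lemma comm_shiftl (F : fieldType) (X Y : 'M[F]_3) c :
  (X - c%:M) *m Y - Y *m (X - c%:M) = X *m Y - Y *m X.
Proof.
by rewrite mulmxBl mulmxBr mul_mx_scalar mul_scalar_mx opprB addrA subrK.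
Qed.

Lemma comm_shiftr (F : fieldType) (X Y : 'M[F]_3) c :
  X *m (Y - c%:M) - (Y - c%:M) *m X = X *m Y - Y *m X.
Proof.
by rewrite mulmxBl mulmxBr mul_mx_scalar mul_scalar_mx opprB addrA subrK.
Qed.

Lemma comm_dec (F : fieldType) (W U U' V M N : 'M[F]_3) c d :
  (W *m (M - c%:M) <= U)%MS -> (U *m (N - d%:M) <= V)%MS ->
  (W *m (N - d%:M) <= U')%MS -> (U' *m (M - c%:M) <= V)%MS ->
  (W *m (M *m N - N *m M) <= V)%MS.
Proof.
move=> h1 h2 h3 h4.
rewrite -(comm_shiftl _ _ c) -(comm_shiftr _ _ d).
rewrite mulmxBr !mulmxA; apply: subB_sub.
  exact: submx_trans (submxMr _ h1) h2.
exact: submx_trans (submxMr _ h3) h4.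
Qed.

Lemma comm_fx (F : fieldType) (W U M M' N N' : 'M[F]_3) :
  M' *m M = 1%:M -> N' *m N = 1%:M -> fx W W M' -> fx W W N' ->
  (W *m (M *m N - N *m M) <= U)%MS -> fx W U (M' *m N' *m M *m N).
Proof.
move=> hM hN h1 h2 h3; rewrite /fx.
have -> : M' *m N' *m M *m N - 1%:M = (M' *m N') *m (M *m N - N *m M).
  by rewrite mulmxBr !mulmxA -(mulmxA M' N' N) hN mulmx1 hM.
rewrite mulmxA; apply: submx_trans h3; apply: submxMr.
rewrite mulmxA; apply: submx_trans (fx_stab h2); apply: submxMr.
exact: fx_stab.
Qed.

Lemma fx_scal (F : fieldType) (U N : 'M[F]_3) d : fx U U N -> (U *m (N - d%:M) <= U)%MS.
Proof.
move/fx_stab => h; rewrite mulmxBr mul_mx_scalar; apply: subB_sub => //.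
by apply: scalemx_sub; apply: submx_refl.
Qed.

Lemma comm_level0 (F : fieldType) (W U M N : 'M[F]_3) :
  (U <= W)%MS -> \rank W = (\rank U).+1 ->
  fx W W M -> fx U U M -> fx W W N -> fx U U N ->
  (W *m (M *m N - N *m M) <= U)%MS.
Proof.
move=> UW rW h1 h2 h3 h4.
have [c hc] := scal_lemma UW rW (fx_stab h1) (fx_stab h2).
have [d hd] := scal_lemma UW rW (fx_stab h3) (fx_stab h4).
by apply: (comm_dec hc _ hd); apply: fx_scal.
Qed.

Definition Qflag (F : fieldType) (l p : 'M[F]_3) (k : nat) (M : 'M[F]_3) : Prop :=
  match k with
  | 0 => fx l l M /\ fx p p M
  | 1 => [/\ fx l 0 M, fx p l M & fx 1%:M p M]
  | 2 => fx p 0 M /\ fx 1%:M l M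
  | _ => M = 1%:M
  end.

Lemma soluble_mat T mul one inv (HG : @is_group T mul one inv) (F : fieldType)
  (phi : T -> 'M[F]_3) (hu : forall g, phi g \in unitmx)
  (hm : forall x y, phi (mul x y) = phi x *m phi y) (hinj : injective phi)
  (S : T -> Prop) (Q : nat -> 'M[F]_3 -> Prop) (N : nat) :
  (forall k, Q k 1%:M) -> (forall k M N, Q k M -> Q k N -> Q k (M *m N)) ->
  (forall k M M' N N', Q k M -> Q k M' -> Q k N -> Q k N' ->
     M' *m M = 1%:M -> N' *m N = 1%:M -> Q k.+1 (M' *m N' *m M *m N)) ->
  (forall M, Q N M -> M = 1%:M) ->
  (forall s, S s -> Q 0 (phi s) /\ Q 0 (phi (inv s))) ->
  soluble mul one inv (gen mul one inv S).
Proof.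
move=> q1 qm qc qN qS.
have p1 : phi one = 1%:M.
  have h : phi one *m phi one = phi one by rewrite -hm; case: HG => _ l1 _ _ _; rewrite l1.
  have := congr1 (mulmx ^~ (invmx (phi one))) h.
  by rewrite /= mulmxK // mulmxV.
have pinv : forall x, phi (inv x) *m phi x = 1%:M.
  by move=> x; rewrite -hm; case: HG => _ _ _ li _; rewrite li.
apply: (soluble_chain (N := N) HG (P := fun k x => Q k (phi x))).
- by move=> k; rewrite p1.
- by move=> k x y hx hy; rewrite hm; apply: qm.
- move=> k x y hx hx' hy hy'; rewrite /commg !hm !mulmxA.
  by apply: qc => //; apply: pinv.
- by move=> x /qN; rewrite -p1 => /hinj.
- exact: qS.
Qed.

Lemma flag_soluble T mul one inv (HG : @is_group T mul one inv) (F : fieldType)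
  (phi : T -> 'M[F]_3) (hu : forall g, phi g \in unitmx)
  (hm : forall x y, phi (mul x y) = phi x *m phi y) (hinj : injective phi)
  (S : T -> Prop) (l p : 'M[F]_3) :
  \rank l = 1%N -> \rank p = 2 -> (l <= p)%MS ->
  (forall s, S s -> (l *m phi s <= l)%MS /\ (p *m phi s <= p)%MS) ->
  soluble mul one inv (gen mul one inv S).
Proof.
move=> rl rp lp hS.
have pinv : forall x, phi (inv x) *m phi x = 1%:M.
  move=> x; rewrite -hm; case: (HG) => _ _ _ li _; rewrite li.
  have h : phi one *m phi one = phi one by rewrite -hm; case: HG => _ l1 _ _ _; rewrite l1.
  have := congr1 (mulmx ^~ (invmx (phi one))) h.
  by rewrite /= mulmxK // mulmxV.
apply: (soluble_mat (N := 3) HG hu hm hinj (Q := Qflag l p)).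
- by case=> [|[|[|k]]] /=; rewrite ?fx_one.
- case=> [|[|[|k]]] /= M N.
  + by case=> h1 h2 [h3 h4]; split; apply: fx_mul.
  + case=> h1 h2 h3 [h4 h5 h6]; split.
    * by apply: fx_mul => //; apply: fx0.
    * by apply: fx_mul => //; apply: (fx_subr (sub0mx _ _)).
    * apply: fx_mul => //; apply: fx_subr lp h5.
  + case=> h1 h2 [h3 h4]; split.
    * by apply: fx_mul => //; apply: fx0.
    * apply: fx_mul => //; apply: (fx_subr (sub0mx _ _)).
      exact: fx_subl lp h3.
  + by move=> -> ->; rewrite mulmx1.
- case=> [|[|[|k]]] /= M M' N N'.
  + case=> h1 h2 [h1' h2'] [h3 h4] [h3' h4'] hM hN; split.
    * apply: comm_fx => //; apply: comm_level0 => //; rewrite ?sub0mx ?mxrank0 ?rl //.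
      exact: fx0.
      exact: fx0.
    * apply: comm_fx => //; apply: comm_level0 => //; rewrite ?rl ?rp //.
    * apply: comm_fx => //; first exact: stab_fx (submx1 _).
        exact: stab_fx (submx1 _).
      apply: comm_level0 => //; rewrite ?submx1 ?mxrank1 ?rp //.
      exact: stab_fx (submx1 _).
      exact: stab_fx (submx1 _).
  + case=> h1 h2 h3 [h1' h2' h3'] [h4 h5 h6] [h4' h5' h6'] hM hN; split.
    * apply: comm_fx => //; first exact: fx_subr lp h2'.
        exact: fx_subr lp h5'.
      by apply: (comm_dec (U := l) (U' := l) (c := 1) (d := 1)).
    * apply: comm_fx => //; first exact: stab_fx (submx1 _).
        exact: stab_fx (submx1 _).
      by apply: (comm_dec (U := p) (U' := p) (c := 1) (d := 1)).
  + case=> h1 h2 [h1' h2'] [h3 h4] [h3' h4'] hM hN.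
    have : fx 1%:M 0 (M' *m N' *m M *m N).
      apply: comm_fx => //; first exact: stab_fx (submx1 _).
        exact: stab_fx (submx1 _).
      apply: (comm_dec (U := l) (U' := l) (c := 1) (d := 1)) => //.
        exact: fx_subl lp h3.
      exact: fx_subl lp h1.
    by rewrite /fx mul1mx submx0 subr_eq0 => /eqP.
  + by move=> -> -> -> -> hM hN; rewrite !mulmx1.
- by move=> M.
- move=> s /hS [h1 h2]; split; split; try exact: stab_fx.
  + exact: stab_fx (stab_inv (pinv s) h1).
  + exact: stab_fx (stab_inv (pinv s) h2).
Qed.
Lemma adds_rvP (F : fieldType) m1 m2 n (w : 'rV[F]_n) (A : 'M[F]_(m1, n)) (B : 'M[F]_(m2, n)) :
  (w <= A + B)%MS -> exists x y, [/\ w = x + y, (x <= A)%MS & (y <= B)%MS].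
Proof.
case/sub_addsmxP => u ->; exists (u.1 *m A), (u.2 *m B); split => //; exact: submxMl.
Qed.

Lemma lin3 (F : fieldType) (k : 'M[F]_3) (v : 'rV[F]_3) a b g :
  v *m (a%:M + b *: k + g *: (k *m k)) = a *: v + b *: (v *m k) + g *: (v *m k *m k).
Proof. by rewrite !mulmxDr mul_mx_scalar !scalemxAr mulmxA. Qed.

Definition pk (F : fieldType) (k : 'M[F]_3) (a b g : F) : 'M[F]_3 :=
  a%:M + b *: k + g *: (k *m k).

Lemma pk_comm (F : fieldType) (k x : 'M[F]_3) a b g :
  x *m k = k *m x -> x *m pk k a b g = pk k a b g *m x.
Proof.
move=> hx; rewrite /pk !mulmxDr !mulmxDl -!scalemxAr -!scalemxAl.
rewrite scalar_mxC mulmxA hx -!mulmxA hx.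
done.
Qed.

Lemma cyc_expr (F : fieldType) (k : 'M[F]_3) (v w : 'rV[F]_3) :
  (w <= v + v *m k + v *m k *m k)%MS -> exists a b g, w = v *m pk k a b g.
Proof.
case/adds_rvP => x [z [-> hx /sub_rVP [g ->]]].
case/adds_rvP: hx => x1 [y [-> /sub_rVP [a ->] /sub_rVP [b ->]]].
by exists a, b, g; rewrite /pk lin3.
Qed.

Lemma comm4 (F : fieldType) (v : 'rV[F]_3) (P Q R a c : 'M[F]_3) :
  a *m P = P *m a -> c *m P = P *m c -> c *m Q = Q *m c -> a *m R = R *m a ->
  Q *m R = R *m Q -> v *m a = v *m Q -> v *m c = v *m R ->
  v *m P *m a *m c = v *m P *m c *m a.
Proof.
move=> hPa hPc hQc hRa hQR va vc.
have e1 : v *m P *m a *m c = v *m R *m Q *m P.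
  by rewrite -(mulmxA v P a) -hPa mulmxA va -(mulmxA _ P c) -hPc mulmxA
    -(mulmxA v Q c) -hQc mulmxA vc.
have e2 : v *m P *m c *m a = v *m Q *m R *m P.
  by rewrite -(mulmxA v P c) -hPc mulmxA vc -(mulmxA _ P a) -hPa mulmxA
    -(mulmxA v R a) -hRa mulmxA va.
by rewrite e1 e2 -(mulmxA v Q R) hQR mulmxA.
Qed.

Lemma cyc_lemma (F : fieldType) (a c k : 'M[F]_3) (v : 'rV[F]_3) (Z : 'M[F]_3) :
  a *m k = k *m a -> c *m k = k *m c -> (v <= Z)%MS ->
  (Z *m a <= Z)%MS -> (Z *m c <= Z)%MS -> (Z <= v + v *m k + v *m k *m k)%MS ->
  Z *m (a *m c - c *m a) = 0.
Proof.
move=> ha hc vZ Za Zc Zv.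
have hZ : forall w : 'rV_3, (w <= Z)%MS -> exists a b g, w = v *m pk k a b g.
  by move=> w wZ; apply: cyc_expr; apply: submx_trans Zv.
have [q1 [q2 [q3 hq]]] : exists x y z, v *m a = v *m pk k x y z.
  apply: hZ; apply: submx_trans Za; exact: submxMr.
have [r1 [r2 [r3 hr]]] : exists x y z, v *m c = v *m pk k x y z.
  apply: hZ; apply: submx_trans Zc; exact: submxMr.
apply/row_matrixP => i; rewrite row_mul row0.
have [p1 [p2 [p3 hp]]] := hZ _ (row_sub i Z).
rewrite hp mulmxBr !mulmxA (comm4 (Q := pk k q1 q2 q3) (R := pk k r1 r2 r3)) ?subrr //;
  try (apply: pk_comm => //).
by symmetry; apply: pk_comm.
Qed.
Lemma comm_scal (F : fieldType) (a y : 'M[F]_3) l :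
  a *m y = y *m a -> a *m (y - l%:M) = (y - l%:M) *m a.
Proof. by move=> h; rewrite mulmxBr mulmxBl h mul_mx_scalar mul_scalar_mx. Qed.

Lemma ker_stab (F : fieldType) (a y : 'M[F]_3) l :
  a *m y = y *m a -> (kermx (y - l%:M) *m a <= kermx (y - l%:M))%MS.
Proof.
move=> h; apply/sub_kermxP.
by rewrite -mulmxA (comm_scal l h) mulmxA mulmx_ker mul0mx.
Qed.

Lemma im_stab (F : fieldType) (a y : 'M[F]_3) l :
  a *m y = y *m a -> ((y - l%:M) *m a <= (y - l%:M))%MS.
Proof. by move=> h; rewrite -(comm_scal l h) submxMl. Qed.

Lemma cap_stab (F : fieldType) (X Y a : 'M[F]_3) :
  (X *m a <= X)%MS -> (Y *m a <= Y)%MS -> ((X :&: Y)%MS *m a <= (X :&: Y))%MS.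
Proof.
move=> hX hY; rewrite sub_capmx; apply/andP; split.
  apply: submx_trans hX; apply: submxMr; exact: capmxSl.
apply: submx_trans hY; apply: submxMr; exact: capmxSr.
Qed.

Lemma nz_row (F : fieldType) (W : 'M[F]_3) : W != 0 -> exists i, row i W != 0.
Proof.
move=> hW; have : ~~ (W <= (0 : 'M[F]_3))%MS by rewrite submx0.
by case/row_subPn => i; rewrite submx0 => h; exists i.
Qed.

Lemma delta_nz (F : fieldType) : (delta_mx 0 0 : 'rV[F]_3) != 0.
Proof. by apply/eqP => /matrixP /(_ 0 0); rewrite !mxE /= => /eqP; rewrite oner_eq0. Qed.

Lemma eigen_or (F : fieldType) (a c y : 'M[F]_3) :
  a *m y = y *m a -> c *m y = y *m c -> a *m c != c *m a ->
  exists l, kermx (y - l%:M) != 0.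
Proof.
move=> ha hc hac.
set v : 'rV[F]_3 := delta_mx 0 0.
have v0 : v != 0 by apply: delta_nz.
case: (boolP (v *m y <= v)%MS) => h1.
  case/sub_rVP: h1 => l hl; exists l.
  apply: contra v0 => /eqP hk.
  have : (v <= kermx (y - l%:M))%MS.
    by apply/sub_kermxP; rewrite mulmxBr mul_mx_scalar hl subrr.
  by rewrite hk submx0.
have rZ : \rank (v + v *m y)%MS = 2%N by rewrite rank_add_line // rank_rV v0.
case: (boolP (v *m y *m y <= v + v *m y)%MS) => h2.
  have sZ : ((v + v *m y)%MS *m y <= v + v *m y)%MS.
    by rewrite addsmxMr addsmx_sub addsmxSr h2.
  have r3 : \rank (1%:M : 'M[F]_3) = (\rank (v + v *m y)%MS).+1 by rewrite mxrank1 rZ.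
  have [m hm] := scal_lemma (submx1 _) r3 (submx1 _) sZ.
  exists m; rewrite -mxrank_eq0 mxrank_ker.
  move: hm; rewrite mul1mx => /mxrankS; rewrite rZ.
  by case: (\rank (y - m%:M)) => [|[|[|]]].
have rZ3 : \rank (v + v *m y + v *m y *m y)%MS = 3%N by rewrite rank_add_line // rZ.
have full : (1%:M <= v + v *m y + v *m y *m y)%MS.
  by rewrite sub1mx /row_full rZ3.
have := cyc_lemma ha hc (submx1 _) (submx1 _) (submx1 _) full.
by rewrite mul1mx => /eqP; rewrite subr_eq0 (negbTE hac).
Qed.

From mathcomp Require Import zify.

Definition noflag (F : fieldType) (a c : 'M[F]_3) := forall l p : 'M[F]_3,
  \rank l = 1%N -> \rank p = 2%N -> (l <= p)%MS -> (l *m a <= l)%MS ->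
  (l *m c <= l)%MS -> (p *m a <= p)%MS -> (p *m c <= p)%MS -> False.

Lemma stabM (F : fieldType) (p a k : 'M[F]_3) :
  a *m k = k *m a -> (p *m a <= p)%MS -> (p *m k *m a <= p *m k)%MS.
Proof. by move=> h hp; rewrite -mulmxA -h mulmxA; apply: submxMr. Qed.

Lemma plane_stab (F : fieldType) (a c k p : 'M[F]_3) :
  noflag a c -> \rank p = 2%N -> (p *m a <= p)%MS -> (p *m c <= p)%MS ->
  k \in unitmx -> a *m k = k *m a -> c *m k = k *m c -> (p *m k <= p)%MS.
Proof.
move=> nf rp pa pc ku ha hc.
set X := (p *m k :&: p)%MS.
have rpk : \rank (p *m k) = 2%N by rewrite mxrankMfree ?row_free_unit.
have Xa : (X *m a <= X)%MS by apply: cap_stab => //; apply: stabM.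
have Xc : (X *m c <= X)%MS by apply: cap_stab => //; apply: stabM.
have hs := mxrank_sum_cap (p *m k) p.
have hc3 := rank_leq_col (p *m k + p)%MS.
have hX2 : (\rank X <= \rank p)%N by apply: mxrankS; apply: capmxSr.
have [h1|h2] : \rank X = 1%N \/ \rank X = 2%N.
  rewrite rpk rp -/X in hs; lia.
  by exfalso; apply: (nf X p) => //; apply: capmxSr.
have := mxrank_leqif_sup (capmxSl (p *m k) p); rewrite -/X h2 rpk.
case=> _ /esym heq; rewrite eqxx in heq.
by apply: submx_trans heq _; apply: capmxSr.
Qed.

Lemma line_scal (F : fieldType) (l a : 'M[F]_3) :
  \rank l = 1%N -> (l *m a <= l)%MS -> exists x, l *m a = x *: l.
Proof.
move=> rl la.
have r : \rank l = (\rank (0 : 'M[F]_3)).+1 by rewrite mxrank0.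
have z0 : ((0 : 'M[F]_3) *m a <= (0 : 'M[F]_3))%MS by rewrite mul0mx sub0mx.
have [x hx] := scal_lemma (sub0mx _ _) r la z0.
exists x; move: hx; rewrite submx0 mulmxBr mul_mx_scalar subr_eq0.
by move/eqP.
Qed.

Lemma scal_on_plane (F : fieldType) (a c k l p : 'M[F]_3) :
  noflag a c -> a *m c != c *m a -> \rank l = 1%N -> \rank p = 2%N ->
  ~~ (l <= p)%MS -> (l *m a <= l)%MS -> (l *m c <= l)%MS ->
  (p *m a <= p)%MS -> (p *m c <= p)%MS ->
  a *m k = k *m a -> c *m k = k *m c -> (p *m k <= p)%MS ->
  exists m, p *m (k - m%:M) = 0.
Proof.
move=> nf hac rl rp nlp la lc pa pc ha hc pk.
have p0 : p != 0 by rewrite -mxrank_eq0 rp.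
have [i hi] := nz_row p0.
set v := row i p in hi.
have vp : (v <= p)%MS by apply: row_sub.
have rv : \rank v = 1%N by rewrite rank_rV hi.
case: (boolP (v *m k <= v)%MS) => h.
  case/sub_rVP: h => m hm; exists m.
  set E := (p :&: kermx (k - m%:M))%MS.
  have vE : (v <= E)%MS.
    rewrite sub_capmx vp /=; apply/sub_kermxP.
    by rewrite mulmxBr mul_mx_scalar hm subrr.
  have Ea : (E *m a <= E)%MS by apply: cap_stab => //; apply: ker_stab.
  have Ec : (E *m c <= E)%MS by apply: cap_stab => //; apply: ker_stab.
  have hE1 : (\rank v <= \rank E)%N by apply: mxrankS.
  have hE2 : (\rank E <= \rank p)%N by apply: mxrankS; apply: capmxSl.
  have [h1|h2] : \rank E = 1%N \/ \rank E = 2%N by lia.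
    by exfalso; apply: (nf E p) => //; apply: capmxSl.
  have := mxrank_leqif_sup (capmxSl p (kermx (k - m%:M))); rewrite -/E h2 rp.
  case=> _ /esym; rewrite eqxx => /(submx_trans)/(_ (capmxSr _ _)).
  by move/sub_kermxP.
exfalso.
have rZ : \rank (v + v *m k)%MS = 2%N by rewrite rank_add_line // rv.
have Zp : (v + v *m k <= p)%MS.
  by rewrite addsmx_sub vp /=; apply: submx_trans pk; apply: submxMr.
have pZ : (p <= v + v *m k)%MS.
  by have := mxrank_leqif_sup Zp; rewrite rZ rp; case=> _ <-.
have pZ3 : (p <= v + v *m k + v *m k *m k)%MS.
  by apply: submx_trans pZ _; apply: addsmxSl.
have hp0 := cyc_lemma ha hc vp pa pc pZ3.
have [x hx] := line_scal rl la.
have [y hy] := line_scal rl lc.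
have hl0 : l *m (a *m c - c *m a) = 0.
  rewrite mulmxBr !mulmxA hx hy -!scalemxAl hx hy !scalerA mulrC subrr.
  done.
have rcap : \rank (l :&: p)%MS = 0%N.
  have := mxrank_leqif_sup (capmxSl l p); rewrite rl.
  case=> hle heq.
  have : (\rank (l :&: p) < 1)%N.
    rewrite ltn_neqAle hle andbT heq; apply/negP => hlc.
    by move: nlp; rewrite (submx_trans hlc (capmxSr _ _)).
  by rewrite ltnS leqn0 => /eqP.
have full : (1%:M <= l + p)%MS.
  rewrite sub1mx /row_full; have := mxrank_sum_cap l p; rewrite rcap rl rp addn0.
  by move=> ->.
have : (a *m c - c *m a <= (0 : 'M[F]_3))%MS.
  have := submxMr (a *m c - c *m a) full; rewrite mul1mx => h1.
  apply: submx_trans h1 _; rewrite addsmxMr hl0 hp0 addsmx_sub.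
  by rewrite submx_refl.
by rewrite submx0 subr_eq0 (negbTE hac).
Qed.

Lemma core (F : fieldType) (a b c d : 'M[F]_3) :
  b \in unitmx -> d \in unitmx ->
  a *m b = b *m a -> b *m c = c *m b -> c *m d = d *m c -> d *m a = a *m d ->
  a *m c != c *m a -> b *m d != d *m b ->
  noflag a c -> noflag b d -> False.
Proof.
move=> bu du hab hbc hcd hda hac hbd nH nK.
have [y [hy1 hy2 hy3]] : exists y : 'M[F]_3,
    [/\ a *m y = y *m a, c *m y = y *m c & forall m, y - m%:M != 0].
  case: (boolP (is_scalar_mx b)) => [/is_scalar_mxP [m hm]|hb].
    exists d; split; [exact: esym hda | exact: hcd | move=> x].
    apply/negP => /eqP /subr0_eq hd; move: hbd; rewrite hm hd.
    by rewrite -!scalar_mxM mulrC eqxx.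
  exists b; split; [exact: hab | exact: esym hbc | move=> x].
  apply/negP => /eqP /subr0_eq hx; move: hb; rewrite hx.
  by apply/negP/negPn/is_scalar_mxP; exists x.
have [m hm] := eigen_or hy1 hy2 hac.
set E := kermx (y - m%:M).
set I := y - m%:M.
have Ea : (E *m a <= E)%MS by apply: ker_stab.
have Ec : (E *m c <= E)%MS by apply: ker_stab.
have Ia : (I *m a <= I)%MS by apply: im_stab.
have Ic : (I *m c <= I)%MS by apply: im_stab.
have rEI : \rank E = (3 - \rank I)%N by rewrite mxrank_ker.
have rE : (1 <= \rank E)%N by rewrite lt0n mxrank_eq0.
have rI : (1 <= \rank I)%N by rewrite lt0n mxrank_eq0 hy3.
have rI3 := rank_leq_col I.
have [l [p [rl rp [la lc pa pc]]]] : exists l p : 'M[F]_3,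
    [/\ \rank l = 1%N, \rank p = 2%N &
        [/\ (l *m a <= l)%MS, (l *m c <= l)%MS, (p *m a <= p)%MS & (p *m c <= p)%MS]].
  have [h1|h2] : \rank I = 1%N \/ \rank I = 2%N by lia.
    by exists I, E; split => //; lia.
  by exists E, I; split => //; lia.
have nlp : ~~ (l <= p)%MS by apply/negP => hlp; apply: (nH l p).
have ab : a *m b = b *m a := hab.
have cb : c *m b = b *m c := esym hbc.
have ad : a *m d = d *m a := esym hda.
have cd : c *m d = d *m c := hcd.
have pb := plane_stab nH rp pa pc bu ab cb.
have pd := plane_stab nH rp pa pc du ad cd.
have [mb hmb] := scal_on_plane nH hac rl rp nlp la lc pa pc ab cb pb.
have [md hmd] := scal_on_plane nH hac rl rp nlp la lc pa pc ad cd pd.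
have p0 : p != 0 by rewrite -mxrank_eq0 rp.
have [i hi] := nz_row p0.
set v := row i p in hi.
have vp : (v <= p)%MS by apply: row_sub.
have rv : \rank v = 1%N by rewrite rank_rV hi.
have vb : (v *m b <= v)%MS.
  have : v *m (b - mb%:M) = 0 by rewrite /v -row_mul hmb row0.
  rewrite mulmxBr mul_mx_scalar => /eqP; rewrite subr_eq0 => /eqP ->.
  by apply: scalemx_sub; apply: submx_refl.
have vd : (v *m d <= v)%MS.
  have : v *m (d - md%:M) = 0 by rewrite /v -row_mul hmd row0.
  rewrite mulmxBr mul_mx_scalar => /eqP; rewrite subr_eq0 => /eqP ->.
  by apply: scalemx_sub; apply: submx_refl.
apply: (nK <<v>>%MS p) => //; rewrite ?genmxE //.
  by rewrite (eqmxMr b (genmxE v)).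
by rewrite (eqmxMr d (genmxE v)).
Qed.

Theorem theorem2p3 (T : Type) (mul : T -> T -> T) (one : T) (inv : T -> T)
  (HG : is_group mul one inv) (A B C D : T)
  (hAB : mul A B = mul B A) (hBC : mul B C = mul C B)
  (hCD : mul C D = mul D C) (hDA : mul D A = mul A D)
  (hAC : ~ soluble mul one inv (gen mul one inv (fun x => x = A \/ x = C)))
  (hBD : ~ soluble mul one inv (gen mul one inv (fun x => x = B \/ x = D))) :
  forall F : fieldType, ~ embeds_in_GL3 mul F.
Proof.
move=> F [phi [hu hm hinj]].
have cm : forall x y, mul x y = mul y x -> phi x *m phi y = phi y *m phi x.
  by move=> x y h; rewrite -!hm h.
have ncm : forall x y, ~ soluble mul one inv (gen mul one inv (fun z => z = x \/ z = y)) ->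
    phi x *m phi y != phi y *m phi x.
  move=> x y hs; apply/negP => /eqP h; apply: hs; apply: soluble_abelian => //.
  by apply: hinj; rewrite !hm.
have nf : forall x y, ~ soluble mul one inv (gen mul one inv (fun z => z = x \/ z = y)) ->
    noflag (phi x) (phi y).
  move=> x y hs l p rl rp lp lx ly px py; apply: hs.
  apply: (flag_soluble HG hu hm hinj rl rp lp).
  by move=> s [->|->]; split.
exact: (core (hu B) (hu D) (cm _ _ hAB) (cm _ _ hBC) (cm _ _ hCD) (cm _ _ hDA)
  (ncm _ _ hAC) (ncm _ _ hBD) (nf _ _ hAC) (nf _ _ hBD)).
Qed.
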